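(* Let $\rho$ be an $n$-qubit pure state, $S\subseteq[n]$ non-empty with $s=|S|$, and $K\ge2$. Let $U=\bigotimes_{i\in S}U_i$ with independent Haar-random $U_i\in U(2)$ (identity outside $S$), and conditioned on $U$ let $\mathbf{Z}_1,\dots,\mathbf{Z}_K\in\{0,1\}^s$ be independent outcomes with distribution $P_U(\mathbf{z})=\operatorname{tr}\big(U\rho U^\dagger(|\mathbf{z}\rangle\langle\mathbf{z}|\otimes\mathbb{I}_{[n]\setminus S})\big)$. Let $$\hat S^{(K)}=\frac{1}{K(K-1)}\sum_{\substack{k,k'=1\\k\ne k'}}^K\mathbb{1}[\mathbf{Z}_k=\mathbf{Z}_{k'}],$$ and set $P_2=\mathbb{E}_U\big[\sum_{\mathbf z}P_U(\mathbf z)^2\big]$, $P_3=\mathbb{E}_U\big[\sum_{\mathbf z}P_U(\mathbf z)^3\big]$, $P_{2,2}=\mathbb{E}_U\big[\big(\sum_{\mathbf z}P_U(\mathbf z)^2\big)^2\big]$. Then $$\operatorname{Var}[\hat S^{(K)}]=\frac{2P_2(1-P_2)+4(K-2)(P_3-P_2^2)}{K(K-1)}+\frac{(K-2)(K-3)(P_{2,2}-P_2^2)}{K(K-1)},$$ where the variance is over both the random unitary and the measurement outcomes.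
   Context: $[n]=\{1,\dots,n\}$ labels the qubits; $\mathbb{1}[A]$ is $1$ if $A$ holds and $0$ otherwise. *)

(* Defs.v *)
From HB Require Import structures.
From mathcomp Require Import all_boot all_order all_algebra.
From mathcomp Require Import complex.
From mathcomp Require Import all_classical all_reals all_analysis.
Import Order.TTheory GRing.Theory Num.Theory.
Import numFieldTopology.Exports numFieldNormedType.Exports.

Set Implicit Arguments.
Unset Strict Implicit.
Unset Printing Implicit Defensive.

Local Open Scope ring_scope.

(* The usual (norm) topology on the complex numbers R[i], hence the product
   topology on 2x2 complex matrices 'M[R[i]]_2. *)
HB.instance Definition _ (R : rcfType) := PseudoPointedMetric.copy R[i] (R[i])^o.

(* computational basis of n qubits: bit strings x : [n] -> {0,1} *)
Definition bits (n : nat) := {ffun 'I_n -> bool}.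

(* measurement outcomes on the qubits of S : {0,1}^S (|S| = s bits) *)
Definition outcome (n : nat) (S : {set 'I_n}) := {ffun {i : 'I_n | i \in S} -> bool}.

(* index of the single-qubit basis vector |b> in a 2x2 matrix *)
Definition bit2 (b : bool) : 'I_2 := if b then ord_max else ord0.

(* operators on (C^2)^{\otimes n}, given by their matrix elements <x|A|y> *)
Definition op (R : rcfType) (n : nat) := bits n -> bits n -> R[i].

Definition opmul (R : rcfType) n (A B : op R n) : op R n :=
  fun x y => \sum_(w : bits n) A x w * B w y.

Definition adj (R : rcfType) n (A : op R n) : op R n :=
  fun x y => (A y x)^*.

Definition trace (R : rcfType) n (A : op R n) : R[i] :=
  \sum_(x : bits n) A x x.

(* U = \bigotimes_{i in S} U_i  (identity on qubits outside S) *)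
Definition tensU (R : rcfType) n (S : {set 'I_n}) (U : 'I_n -> 'M[R[i]]_2) : op R n :=
  fun x y => \prod_(i < n)
    (if i \in S then U i (bit2 (x i)) (bit2 (y i)) else ((x i == y i)%:R : R[i])).

Definition pure_dm (R : rcfType) n (psi : bits n -> R[i]) : op R n :=
  fun x y => psi x * (psi y)^*.

(* |z><z| (x) I_{[n] \ S} *)
Definition proj_out (R : rcfType) n (S : {set 'I_n}) (z : outcome S) : op R n :=
  fun x y => (((x == y) && [forall i : {i : 'I_n | i \in S}, x (val i) == z i]) %:R).

(* P_U(z) = tr(U rho U^dagger (|z><z| (x) I)) (a real number; we take its real part) *)
Definition prob_out (R : rcfType) n (psi : bits n -> R[i]) (S : {set 'I_n})
    (U : 'I_n -> 'M[R[i]]_2) (z : outcome S) : R :=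
  complex.Re (trace (opmul (opmul (opmul (tensU S U) (pure_dm psi))
                                  (adj (tensU S U))) (proj_out R z))).

Definition is_unitary (R : rcfType) (M : 'M[R[i]]_2) : bool :=
  M *m (map_mx (fun c => c^*) M)^T == 1%:M.

Local Open Scope ereal_scope.
Definition Expect (R : realType) (d : measure_display) (T : measurableType d)
    (P : probability T R) (f : T -> R) : R :=
  fine (\int[P]_w (f w)%:E).
Local Close Scope ereal_scope.

Definition bounded_continuous (R : realType) (f : 'M[R[i]]_2 -> R) : Prop :=
  continuous f /\ exists M : R, forall A, `|f A| <= M.

(* V is a Haar-distributed random element of U(2): unitary-valued, a (Borel)
   random variable, and its law is invariant under left multiplication by any
   fixed unitary (this characterizes the normalized Haar measure of U(2)). *)
Definition haar_U2 (R : realType) (d : measure_display) (T : measurableType d)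
    (P : probability T R) (V : T -> 'M[R[i]]_2) : Prop :=
  [/\ forall w, is_unitary (V w),
      forall f, bounded_continuous f -> measurable_fun setT (f \o V)
    & forall W, is_unitary W -> forall f, bounded_continuous f ->
        Expect P (fun w => f (W *m V w)) = Expect P (fun w => f (V w))].

Definition mutually_independent (R : realType) (d : measure_display)
    (T : measurableType d) (P : probability T R) n (S : {set 'I_n})
    (V : 'I_n -> T -> 'M[R[i]]_2) : Prop :=
  forall f : 'I_n -> 'M[R[i]]_2 -> R,
    (forall i, i \in S -> bounded_continuous (f i)) ->
    Expect P (fun w => \prod_(i in S) f i (V i w))
    = \prod_(i in S) Expect P (fun w => f i (V i w)).

Definition shat n (S : {set 'I_n}) (K : nat) (R : realType)
    (Z : {ffun 'I_K -> outcome S}) : R :=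
  (K%:R * (K%:R - 1))^-1 *
  \sum_(k < K) \sum_(k' < K | k' != k) ((Z k == Z k')%:R).

(* Expectation over both U and the outcomes: conditioned on U, the Z_k are
   i.i.d. with law P_U. *)
Definition EJ (R : realType) (d : measure_display) (T : measurableType d)
    (P : probability T R) n (psi : bits n -> R[i]) (S : {set 'I_n})
    (U : 'I_n -> T -> 'M[R[i]]_2) (K : nat) (g : {ffun 'I_K -> outcome S} -> R) : R :=
  Expect P (fun w => \sum_(Z : {ffun 'I_K -> outcome S})
    (\prod_(k < K) prob_out psi (fun i => U i w) (Z k)) * g Z).

Definition var_shat (R : realType) (d : measure_display) (T : measurableType d)
    (P : probability T R) n (psi : bits n -> R[i]) (S : {set 'I_n})
    (U : 'I_n -> T -> 'M[R[i]]_2) (K : nat) : R :=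
  EJ P psi U (fun Z : {ffun 'I_K -> outcome S} => (shat R Z) ^+ 2)
  - (EJ P psi U (fun Z : {ffun 'I_K -> outcome S} => shat R Z)) ^+ 2.

Definition Pmom (R : realType) (d : measure_display) (T : measurableType d)
    (P : probability T R) n (psi : bits n -> R[i]) (S : {set 'I_n})
    (U : 'I_n -> T -> 'M[R[i]]_2) (k : nat) : R :=
  Expect P (fun w => \sum_(z : outcome S) (prob_out psi (fun i => U i w) z) ^+ k).

Definition P22 (R : realType) (d : measure_display) (T : measurableType d)
    (P : probability T R) n (psi : bits n -> R[i]) (S : {set 'I_n})
    (U : 'I_n -> T -> 'M[R[i]]_2) : R :=
  Expect P (fun w => (\sum_(z : outcome S) (prob_out psi (fun i => U i w) z) ^+ 2) ^+ 2).

(* Main.v *)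
Require Import Defs.
From HB Require Import structures.
From mathcomp Require Import all_boot all_order all_algebra.
From mathcomp Require Import complex.
From mathcomp Require Import all_classical all_reals all_analysis.
From mathcomp Require Import measurable_realfun.
From mathcomp Require Import ring lra zify.
From Stdlib Require Import Lia.
Import Order.TTheory GRing.Theory Num.Theory.
Local Open Scope ring_scope.
Import numFieldTopology.Exports numFieldNormedType.Exports.
Section Comb.
Variables (R : realType) (O : finType) (p : O -> R) (K : nat).
Hypothesis hp : \sum_z p z = 1.

Lemma sum_pred1R (l : 'I_K) (f : 'I_K -> R) :
  \sum_j ((j == l)%:R * f j) = f l.
Proof.
rewrite (bigD1 l) //= eqxx mul1r big1 ?addr0 // => j /negbTE ->; by rewrite mul0r.
Qed.

Lemma sum_pred1N (l : 'I_K) (f : 'I_K -> nat) :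
  (\sum_j ((j == l) * f j) = f l)%N.
Proof.
rewrite (bigD1 l) //= eqxx mul1n big1 ?addn0 // => j /negbTE ->; by rewrite mul0n.
Qed.

Lemma factor (g : 'I_K -> O -> R) :
  \sum_(Z : {ffun 'I_K -> O}) (\prod_k p (Z k)) * \prod_k g k (Z k)
  = \prod_k \sum_x p x * g k x.
Proof.
rewrite bigA_distr_bigA; apply: eq_bigr => Z _; by rewrite -big_split.
Qed.

Lemma prod_h (a b : 'I_K -> bool) (h : bool -> bool -> R) :
  h false false = 1 ->
  \prod_j h (a j) (b j) =
  h true true ^+ (\sum_j (a j && b j))%N * h true false ^+ (\sum_j (a j && ~~ b j))%N
  * h false true ^+ (\sum_j (~~ a j && b j))%N.
Proof.
move=> h00; rewrite -!prodrXr -!big_split /=; apply: eq_bigr => j _.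
by case: (a j); case: (b j); rewrite /= ?expr1 ?expr0 ?mulr1 ?mul1r.
Qed.


Definition ind (A : bool) (z x : O) : R := if A then ((x == z)%:R) else 1.

Lemma ind_eq {k k' : 'I_K} (hk : k != k') (Z : {ffun 'I_K -> O}) :
  ((Z k == Z k')%:R : R) = \sum_z \prod_j ind ((j==k)||(j==k')) z (Z j).
Proof.
have E z : \prod_j ind ((j==k)||(j==k')) z (Z j) = (Z k == z)%:R * (Z k' == z)%:R.
  rewrite (bigD1 k) //= eqxx /= (bigD1 k') /=; last by rewrite eq_sym.
  rewrite eqxx orbT /= big1 ?mulr1 // => j /andP [hj1 hj2].
  by rewrite /ind (negbTE hj1) (negbTE hj2).
under eq_bigr do rewrite E.
rewrite (bigD1 (Z k)) //= eqxx mul1r big1 ?addr0 ?(eq_sym (Z k')) // => z hz.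
by rewrite eq_sym (negbTE hz) mul0r.
Qed.

Lemma nat_or (j l l' : 'I_K) : l != l' -> (((j == l) || (j == l')) = (j == l) + (j == l') :> nat)%N.
Proof.
move=> hl; case: (eqVneq j l) => [->|] //=; first by rewrite (negbTE hl).
Qed.

Lemma sum_or {k k' : 'I_K} (f : 'I_K -> nat) : k != k' ->
  (\sum_j (((j == k) || (j == k')) * f j) = f k + f k')%N.
Proof.
move=> hk; under eq_bigr do rewrite nat_or // mulnDl.
by rewrite big_split /= !sum_pred1N.
Qed.

Lemma count2 {k k' : 'I_K} : k != k' -> (\sum_j ((j == k) || (j == k')) = 2)%N.
Proof.
move=> hk; have := sum_or (fun _ => 1%N) hk.
by under eq_bigr do rewrite muln1.
Qed.

Lemma split_and (a b : 'I_K -> bool) :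
  (\sum_j (a j && b j) + \sum_j (a j && ~~ b j) = \sum_j a j)%N.
Proof. rewrite -big_split; apply: eq_bigr => j _; by case: (a j); case: (b j). Qed.

Lemma split_and' (a b : 'I_K -> bool) :
  (\sum_j (a j && b j) + \sum_j (~~ a j && b j) = \sum_j b j)%N.
Proof. rewrite -big_split; apply: eq_bigr => j _; by case: (a j); case: (b j). Qed.

Definition G (c : nat) : R :=
  \sum_z \sum_z' (((z == z')%:R * p z) ^+ c * p z ^+ (2 - c) * p z' ^+ (2 - c)).

Definition F (k k' l l' : 'I_K) : R :=
  \sum_(Z : {ffun 'I_K -> O}) (\prod_j p (Z j)) * ((Z k == Z k')%:R * (Z l == Z l')%:R).

Lemma F_eq (k k' l l' : 'I_K) : k != k' -> l != l' ->
  F k k' l l' = G (((l == k) || (l == k')) + ((l' == k) || (l' == k'))).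
Proof.
move=> hk hl; rewrite /F.
under eq_bigr => Z _ do rewrite (ind_eq hk) (ind_eq hl) mulr_suml mulr_sumr.
rewrite exchange_big /=; apply: eq_bigr => z _.
under eq_bigr => Z _ do rewrite !mulr_sumr.
rewrite exchange_big /=; apply: eq_bigr => z' _.
under eq_bigr => Z _ do rewrite -big_split /=.
rewrite (factor (fun j x => ind ((j==k)||(j==k')) z x * ind ((j==l)||(j==l')) z' x)).
set a := fun j : 'I_K => (j==k)||(j==k').
set b := fun j : 'I_K => (j==l)||(j==l').
pose h := fun (u v : bool) => \sum_x p x * (ind u z x * ind v z' x).
transitivity (\prod_j h (a j) (b j)); first by [].
rewrite (prod_h a b h); last by rewrite /h /ind; under eq_bigr do rewrite !mulr1; exact: hp.
have ec : (\sum_j (a j && b j) = a l + a l')%N.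
  rewrite -(sum_or a hl); apply: eq_bigr => j _; rewrite /b; by case: (a j); case: ((j==l)||(j==l')).
have sa : (\sum_j a j = 2)%N := count2 hk.
have sb : (\sum_j b j = 2)%N := count2 hl.
have e1 := split_and a b; have e2 := split_and' a b.
have -> : (\sum_j (a j && ~~ b j) = 2 - (a l + a l'))%N by lia.
have -> : (\sum_j (~~ a j && b j) = 2 - (a l + a l'))%N by lia.
rewrite ec /a /h /ind.
have -> : \sum_x p x * ((x == z)%:R * (x == z')%:R) = (z == z')%:R * p z.
  rewrite (bigD1 z) //= eqxx mul1r big1 ?addr0; first by rewrite mulrC.
  by move=> x /negbTE ->; rewrite mul0r mulr0.
have -> : \sum_x p x * ((x == z)%:R * 1) = p z.
  rewrite (bigD1 z) //= eqxx mulr1 mulr1 big1 ?addr0 // => x /negbTE ->; by rewrite mul0r mulr0.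
have -> : \sum_x p x * (1 * (x == z')%:R) = p z'.
  rewrite (bigD1 z') //= eqxx !mulr1 ?mul1r big1 ?addr0 // => x /negbTE ->; by rewrite mul1r mulr0.
by [].
Qed.


Lemma G0 : G 0 = (\sum_z p z ^+ 2) ^+ 2.
Proof.
rewrite /G expr2 big_distrl /=; apply: eq_bigr => z _; rewrite big_distrr /=.
by apply: eq_bigr => z' _; rewrite expr0 mul1r subn0.
Qed.

Lemma G1 : G 1 = \sum_z p z ^+ 3.
Proof.
rewrite /G; apply: eq_bigr => z _; rewrite (bigD1 z) //= eqxx big1 ?addr0.
  rewrite (_ : (2 - 1 = 1)%N) //=; ring.
by move=> z' /negbTE; rewrite eq_sym => ->; rewrite mul0r expr1 !mul0r.
Qed.

Lemma G2 : G 2 = \sum_z p z ^+ 2.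
Proof.
rewrite /G; apply: eq_bigr => z _; rewrite (bigD1 z) //= eqxx big1 ?addr0.
  by rewrite mul1r subnn !expr0 !mulr1.
by move=> z' /negbTE; rewrite eq_sym => ->; rewrite mul0r expr0n /= !mul0r.
Qed.

Lemma sumneq (k : 'I_K) (f : 'I_K -> R) :
  \sum_(k' < K | k' != k) f k' = \sum_k' f k' - f k.
Proof. by rewrite [X in _ = X - _](bigD1 k) //= addrC addrK. Qed.

Lemma sum_bool (a : 'I_K -> bool) (H : bool -> R) :
  \sum_j H (a j) = (\sum_j a j)%N%:R * H true + (K - \sum_j a j)%N%:R * H false.
Proof.
have e : (\sum_j a j + \sum_j ~~ a j = K)%N.
  rewrite -big_split /= (eq_bigr (fun=> 1%N)) ?sum1_card ?card_ord // => j _.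
  by case: (a j).
have -> : (K - \sum_j a j = \sum_j ~~ a j)%N by lia.
rewrite !natr_sum !mulr_suml -big_split /=; apply: eq_bigr => j _.
by case: (a j); rewrite /= ?mul1r ?mul0r ?addr0 ?add0r.
Qed.

Definition Ex (f : {ffun 'I_K -> O} -> R) : R :=
  \sum_(Z : {ffun 'I_K -> O}) (\prod_j p (Z j)) * f Z.

Lemma Ex_sum (I : Type) (r : seq I) (P : pred I) (f : I -> {ffun 'I_K -> O} -> R) :
  Ex (fun Z => \sum_(i <- r | P i) f i Z) = \sum_(i <- r | P i) Ex (f i).
Proof. rewrite /Ex; under eq_bigr do rewrite mulr_sumr; exact: exchange_big. Qed.

Lemma Ex_scale c f : Ex (fun Z => c * f Z) = c * Ex f.
Proof. rewrite /Ex mulr_sumr; apply: eq_bigr => Z _; by rewrite mulrCA. Qed.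

Definition Asum (Z : {ffun 'I_K -> O}) : R :=
  \sum_(k < K) \sum_(k' < K | k' != k) ((Z k == Z k')%:R).

Hypothesis hK : (2 <= K)%N.

Lemma inner (k k' : 'I_K) : k != k' ->
  \sum_(l < K) \sum_(l' < K | l' != l) F k k' l l' =
  2 * G 2 + 4 * (K - 2)%N%:R * G 1 + (K - 2)%N%:R * ((K - 2)%N%:R - 1) * G 0.
Proof.
move=> hk.
set a := fun j : 'I_K => (j==k)||(j==k').
have sa : (\sum_j a j = 2)%N := count2 hk.
have E1 l : \sum_(l' < K | l' != l) F k k' l l' =
   2 * G (a l + 1) + (K - 2)%N%:R * G (a l + 0) - G (a l + a l).
  rewrite (eq_bigr (fun l' => G (a l + a l'))); last first.
    by move=> l' hl; apply: F_eq => //; rewrite eq_sym.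
  rewrite sumneq (sum_bool a (fun b => G (a l + b))) sa.
  by rewrite addnn.
rewrite (eq_bigr _ (fun l _ => E1 l)).
rewrite (sum_bool a (fun b => 2 * G (b + 1) + (K - 2)%N%:R * G (b + 0) - G (b + b))) sa /=.
rewrite !addn0 !add0n addn1; ring.
Qed.

Lemma sum_constK (x : R) : \sum_(k < K) x = K%:R * x.
Proof. by rewrite -(big_mkord xpredT (fun=> x)) sumr_const_nat subn0 mulr_natl. Qed.

Lemma sum_pairs (x : R) : \sum_(k < K) \sum_(k' < K | k' != k) x = K%:R * (K%:R - 1) * x.
Proof.
under eq_bigr => k _ do rewrite (sumneq k (fun=> x)) sum_constK.
rewrite sum_constK; ring.
Qed.

Lemma ExA : Ex Asum = K%:R * (K%:R - 1) * G 2.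
Proof.
rewrite /Asum Ex_sum -sum_pairs; apply: eq_bigr => k _.
rewrite Ex_sum; apply: eq_bigr => k' hk'.
have hk : k != k' by rewrite eq_sym.
rewrite -[X in X = _](_ : F k k' k k' = _); last first.
  rewrite /F /Ex; apply: eq_bigr => Z _; by case: (Z k == Z k'); rewrite ?mulr1 ?mulr0.
by rewrite F_eq // !eqxx orbT.
Qed.

Lemma ExA2 : Ex (fun Z => Asum Z ^+ 2) =
  K%:R * (K%:R - 1) * (2 * G 2 + 4 * (K - 2)%N%:R * G 1 + (K - 2)%N%:R * ((K - 2)%N%:R - 1) * G 0).
Proof.
have -> : (fun Z => Asum Z ^+ 2) = fun Z => \sum_(k < K) \sum_(k' < K | k' != k)
    \sum_(l < K) \sum_(l' < K | l' != l) ((Z k == Z k')%:R * (Z l == Z l')%:R).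
  apply: funext => Z; rewrite expr2 /Asum big_distrl; apply: eq_bigr => k _.
  rewrite big_distrl; apply: eq_bigr => k' _.
  rewrite big_distrr; apply: eq_bigr => l _; by rewrite big_distrr.
rewrite Ex_sum -sum_pairs; apply: eq_bigr => k _.
rewrite Ex_sum; apply: eq_bigr => k' hk'.
have hk : k != k' by rewrite eq_sym.
rewrite -(inner _ _ hk).
rewrite Ex_sum; apply: eq_bigr => l _.
rewrite Ex_sum; apply: eq_bigr => l' _.
by [].
Qed.

End Comb.
Section Phys.
Variables (R : realType) (n : nat) (psi : bits n -> R[i]) (S : {set 'I_n}).
Hypothesis hpsi : \sum_(x : bits n) `|psi x| ^+ 2 = 1.

Lemma ReD (x y : R[i]) : complex.Re (x + y) = complex.Re x + complex.Re y.
Proof. by case: x; case: y. Qed.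

Lemma Re_sum (I : Type) (r : seq I) (P : pred I) (f : I -> R[i]) :
  complex.Re (\sum_(i <- r | P i) f i) = \sum_(i <- r | P i) complex.Re (f i).
Proof. by apply: (big_morph _ ReD). Qed.

Lemma sum_bit2 (f : 'I_2 -> R[i]) : \sum_(b : bool) f (bit2 b) = \sum_(j < 2) f j.
Proof.
rewrite big_bool /= [RHS]big_ord_recl big_ord1 addrC; congr (_ + _); congr f; exact: val_inj.
Qed.

Lemma proj_sum (x y : bits n) : \sum_(z : outcome S) proj_out R z x y = (x == y)%:R.
Proof.
rewrite /proj_out.
pose z0 : outcome S := [ffun i => x (val i)].
rewrite (bigD1 z0) //= big1.
  rewrite addr0; congr (_%:R); case: (x == y) => //=.
  suff -> : [forall i, x (sval i) == z0 i] by [].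
  by apply/forallP => i; rewrite ffunE.
move=> z hz; case: (x == y) => //=.
case: forallP => // h; move/eqP: hz; case; apply/ffunP => i; rewrite ffunE.
by apply/esym/eqP; apply: h.
Qed.

Lemma sum_prob_trace (Um : 'I_n -> 'M[R[i]]_2) :
  \sum_(z : outcome S) prob_out psi Um z =
  complex.Re (trace (opmul (opmul (tensU S Um) (pure_dm psi)) (adj (tensU S Um)))).
Proof.
rewrite /prob_out -Re_sum; congr complex.Re.
rewrite /trace exchange_big /=; apply: eq_bigr => x _.
rewrite {1}/opmul exchange_big /=.
under eq_bigr => w _ do rewrite -mulr_sumr proj_sum.
rewrite (bigD1 x) //= eqxx mulr1 big1 ?addr0 // => w /negbTE ->; by rewrite mulr0.
Qed.

Lemma unit_col (M : 'M[R[i]]_2) : Defs.is_unitary M ->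
  forall c c' : 'I_2, \sum_(b < 2) M b c * (M b c')^* = (c == c')%:R.
Proof.
move=> /eqP hM c c'.
have h2 := mulmx1C hM.
move/matrixP: h2 => /(_ c' c); rewrite [in RHS]mxE => h; rewrite eq_sym -h; rewrite mxE; apply: eq_bigr => b _; by rewrite !mxE mulrC.
Qed.

Lemma conj_prod (R' : rcfType) (I : Type) (r : seq I) (P : pred I) (F : I -> R'[i]) :
  (\prod_(i <- r | P i) F i)^* = \prod_(i <- r | P i) (F i)^*.
Proof. exact: rmorph_prod. Qed.

Lemma prod_eqb (v w : bits n) : \prod_i ((v i == w i)%:R : R[i]) = (v == w)%:R.
Proof.
case: (eqVneq v w) => [->|ne]; first by rewrite big1 // => i _; rewrite eqxx.
have [i hi] : exists i, v i != w i.
  apply/existsP; apply: contraNT ne => /existsPn h; apply/eqP/ffunP => i.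
  by apply/eqP; move: (h i); rewrite negbK.
by rewrite (bigD1 i) //= (negbTE hi) mul0r.
Qed.

Lemma tens_col (Um : 'I_n -> 'M[R[i]]_2)
  (hU : forall i, i \in S -> Defs.is_unitary (Um i)) (v w : bits n) :
  \sum_x tensU S Um x v * (tensU S Um x w)^* = (v == w)%:R.
Proof.
rewrite /tensU.
under eq_bigr => x _ do rewrite rmorph_prod -big_split /=.
rewrite -(bigA_distr_bigA (fun i b => (if i \in S then Um i (bit2 b) (bit2 (v i)) else ((b == v i)%:R : R[i])) * (if i \in S then Um i (bit2 b) (bit2 (w i)) else ((b == w i)%:R : R[i]))^*)).
rewrite -prod_eqb; apply: eq_bigr => i _.
case hi: (i \in S).
  rewrite (sum_bit2 (fun j => Um i j (bit2 (v i)) * (Um i j (bit2 (w i)))^*)).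
  rewrite unit_col ?hU //; by case: (v i); case: (w i).
rewrite big_bool /=; by case: (v i); case: (w i); rewrite /= ?conjC_nat ?conjC0 ?conjC1 ?mulr0 ?mul0r ?mulr1 ?addr0 ?add0r.
Qed.

Lemma trace_one (Um : 'I_n -> 'M[R[i]]_2)
  (hU : forall i, i \in S -> Defs.is_unitary (Um i)) :
  trace (opmul (opmul (tensU S Um) (pure_dm psi)) (adj (tensU S Um))) = 1.
Proof.
set W := tensU S Um.
have e x : opmul (opmul W (pure_dm psi)) (adj W) x x =
    \sum_v \sum_w W x v * (W x w)^* * pure_dm psi v w.
  rewrite /opmul /adj.
  under eq_bigr => w _ do rewrite big_distrl.
  rewrite exchange_big /=; apply: eq_bigr => v _; apply: eq_bigr => w _.
  by rewrite mulrAC.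
rewrite /trace; under eq_bigr => x _ do rewrite e.
rewrite exchange_big /=.
under eq_bigr => v _ do rewrite exchange_big /=.
under eq_bigr => v _ do under eq_bigr => w _ do rewrite -big_distrl /= tens_col //.
rewrite -[RHS]hpsi; apply: eq_bigr => v _.
rewrite (bigD1 v) //= eqxx mul1r big1 ?addr0.
  by rewrite /pure_dm normCK.
by move=> w /negbTE; rewrite eq_sym => ->; rewrite mul0r.
Qed.

Lemma sum_prob_one (Um : 'I_n -> 'M[R[i]]_2)
  (hU : forall i, i \in S -> Defs.is_unitary (Um i)) :
  \sum_(z : outcome S) prob_out psi Um z = 1.
Proof. by rewrite sum_prob_trace trace_one. Qed.
End Phys.
Section Meas.
Variables (R : realType) (d : measure_display) (T : measurableType d) (P : probability T R).

Definition rgood (f : T -> R) := measurable_fun setT f /\ exists M : R, forall w, `|f w| <= M.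
Definition cgood (g : T -> R[i]) :=
  rgood (fun w => complex.Re (g w)) /\ rgood (fun w => complex.Im (g w)).

Lemma rgood_cst c : rgood (fun _ => c).
Proof. split; [exact: measurable_cst | by exists `|c|]. Qed.

Lemma rgood_add f g : rgood f -> rgood g -> rgood (fun w => f w + g w).
Proof.
move=> [mf [M1 h1]] [mg [M2 h2]]; split; first exact: measurable_funD.
exists (M1 + M2) => w; apply: le_trans (ler_normD _ _) _; exact: lerD.
Qed.

Lemma rgood_mul f g : rgood f -> rgood g -> rgood (fun w => f w * g w).
Proof.
move=> [mf [M1 h1]] [mg [M2 h2]]; split; first exact: measurable_funM.
exists (M1 * M2) => w; rewrite normrM; apply: ler_pM => //.
Qed.

Lemma rgood_opp f : rgood f -> rgood (fun w => - f w).
Proof.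
move=> [mf [M h]]; split; first exact: measurable_funN.
by exists M => w; rewrite normrN.
Qed.

Lemma rgood_sum (I : Type) (r : seq I) (Q : pred I) (F : I -> T -> R) :
  (forall i, rgood (F i)) -> rgood (fun w => \sum_(i <- r | Q i) F i w).
Proof.
move=> h; elim: r => [|x r IH].
  under [X in rgood X]funext => w do rewrite big_nil. exact: rgood_cst.
under [X in rgood X]funext => w do rewrite big_cons.
case: (Q x) => //; exact: rgood_add.
Qed.

Lemma rgood_exp f k : rgood f -> rgood (fun w => f w ^+ k).
Proof.
move=> h; elim: k => [|k IH].
  under [X in rgood X]funext => w do rewrite expr0. exact: rgood_cst.
under [X in rgood X]funext => w do rewrite exprS. exact: rgood_mul.
Qed.

Lemma rgood_int f : rgood f -> P.-integrable setT (EFin \o f).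
Proof.
move=> [mf [M h]]; apply: measurable_bounded_integrable => //.
  apply: (le_lt_trans (probability_le1 P measurableT)); exact: ltry.
exists M; split; first exact: num_real.
by move=> M' hM' x _; apply: le_trans (h x) (ltW hM').
Qed.

Lemma Expect_add f g : rgood f -> rgood g ->
  Expect P (fun w => f w + g w) = Expect P f + Expect P g.
Proof. move=> hf hg; have := RintegralD measurableT (rgood_int _ hf) (rgood_int _ hg); by rewrite /Rintegral. Qed.

Lemma Expect_scale c f : rgood f -> Expect P (fun w => c * f w) = c * Expect P f.
Proof. move=> hf; have := RintegralZl c measurableT (rgood_int _ hf); by rewrite /Rintegral. Qed.


Lemma ReM (x y : R[i]) : complex.Re (x * y) = complex.Re x * complex.Re y - complex.Im x * complex.Im y.
Proof. by case: x; case: y. Qed.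
Lemma ImM (x y : R[i]) : complex.Im (x * y) = complex.Re x * complex.Im y + complex.Im x * complex.Re y.
Proof. case: x => a b; case: y => c e /=; ring. Qed.
Lemma ReDc (x y : R[i]) : complex.Re (x + y) = complex.Re x + complex.Re y.
Proof. by case: x; case: y. Qed.
Lemma ImDc (x y : R[i]) : complex.Im (x + y) = complex.Im x + complex.Im y.
Proof. by case: x; case: y. Qed.
Lemma ReJc (x : R[i]) : complex.Re (x^*) = complex.Re x.
Proof. by case: x. Qed.
Lemma ImJc (x : R[i]) : complex.Im (x^*) = - complex.Im x.
Proof. by case: x. Qed.

Lemma cgood_cst c : cgood (fun _ => c).
Proof. split; exact: rgood_cst. Qed.

Lemma cgood_add f g : cgood f -> cgood g -> cgood (fun w => f w + g w).
Proof.
move=> [h1 h2] [h3 h4]; split.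
  under [X in rgood X]funext => w do rewrite ReDc. exact: rgood_add.
under [X in rgood X]funext => w do rewrite ImDc. exact: rgood_add.
Qed.

Lemma cgood_mul f g : cgood f -> cgood g -> cgood (fun w => f w * g w).
Proof.
move=> [h1 h2] [h3 h4]; split.
  under [X in rgood X]funext => w do rewrite ReM.
  apply: rgood_add; [exact: rgood_mul| apply: rgood_opp; exact: rgood_mul].
under [X in rgood X]funext => w do rewrite ImM.
apply: rgood_add; exact: rgood_mul.
Qed.

Lemma cgood_conj f : cgood f -> cgood (fun w => (f w)^*).
Proof.
move=> [h1 h2]; split.
  by under [X in rgood X]funext => w do rewrite ReJc.
under [X in rgood X]funext => w do rewrite ImJc. exact: rgood_opp.
Qed.

Lemma cgood_sum (I : Type) (r : seq I) (Q : pred I) (F : I -> T -> R[i]) :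
  (forall i, cgood (F i)) -> cgood (fun w => \sum_(i <- r | Q i) F i w).
Proof.
move=> h; elim: r => [|x r IH].
  under [X in cgood X]funext => w do rewrite big_nil. exact: cgood_cst.
under [X in cgood X]funext => w do rewrite big_cons.
case: (Q x) => //; exact: cgood_add.
Qed.

Lemma cgood_prod (I : Type) (r : seq I) (Q : pred I) (F : I -> T -> R[i]) :
  (forall i, cgood (F i)) -> cgood (fun w => \prod_(i <- r | Q i) F i w).
Proof.
move=> h; elim: r => [|x r IH].
  under [X in cgood X]funext => w do rewrite big_nil. exact: cgood_cst.
under [X in cgood X]funext => w do rewrite big_cons.
case: (Q x) => //; exact: cgood_mul.
Qed.

Lemma cgood_if (b : bool) f g : (b -> cgood f) -> (~~ b -> cgood g) ->
  cgood (fun w => if b then f w else g w).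
Proof. by case: b => [h _|_ h]; apply: h. Qed.


Lemma Re_le_norm (u : R[i]) : `|complex.Re u| <= complex.Re `|u|.
Proof.
rewrite normc_def /= -sqrtr_sqr; apply: ler_wsqrtr.
by rewrite lerDl sqr_ge0.
Qed.

Lemma Im_le_norm (u : R[i]) : `|complex.Im u| <= complex.Re `|u|.
Proof.
rewrite normc_def /= -sqrtr_sqr; apply: ler_wsqrtr.
by rewrite lerDr sqr_ge0.
Qed.

Lemma Re_cont : continuous (fun z : R[i] => complex.Re z).
Proof.
move=> z A /= /nbhs_ballP [e e0 he].
exists (e%:C)%C => /=; first by rewrite ltcR.
move=> t /= hzt; apply: he => /=.
rewrite /ball /=; move: hzt; rewrite ltcE => /andP [_ h].
apply: le_lt_trans h; apply: le_trans (Re_le_norm (z - t)).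
by case: z; case: t => a b c f /=.
Qed.

Lemma Im_cont : continuous (fun z : R[i] => complex.Im z).
Proof.
move=> z A /= /nbhs_ballP [e e0 he].
exists (e%:C)%C => /=; first by rewrite ltcR.
move=> t /= hzt; apply: he => /=.
rewrite /ball /=; move: hzt; rewrite ltcE => /andP [_ h].
apply: le_lt_trans h; apply: le_trans (Im_le_norm (z - t)).
by case: z; case: t => a b c f /=.
Qed.

Definition clampf (h : 'M[R[i]]_2 -> R) : 'M[R[i]]_2 -> R :=
  (fun _ => -1) \max ((fun _ => 1) \min h).

Lemma clamp_bc h : continuous h -> bounded_continuous (clampf h).
Proof.
move=> hc; split.
  move=> A; apply: continuous_max; first exact: cst_continuous.
  apply: continuous_min; [exact: cst_continuous | exact: hc].
exists 1 => A; rewrite /clampf /= ler_norml; apply/andP; split.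
  by rewrite le_max lexx.
rewrite ge_max ge_min lexx /= andbT; lra.
Qed.

Lemma clamp_id h A : `|h A| <= 1 -> clampf h A = h A.
Proof.
rewrite ler_norml => /andP [h1 h2]; rewrite /clampf /=.
by rewrite (min_r h2) (max_r h1).
Qed.

Lemma unit_bound (M : 'M[R[i]]_2) : Defs.is_unitary M -> forall a b,
  complex.Re (M a b) ^+ 2 + complex.Im (M a b) ^+ 2 <= 1.
Proof.
move=> /eqP hM a b.
move/matrixP: hM => /(_ a a); rewrite !mxE eqxx /= => h.
have e : \sum_j (complex.Re (M a j) ^+ 2 + complex.Im (M a j) ^+ 2) = 1.
  have := congr1 (@complex.Re R) h; rewrite /= => <-.
  rewrite (big_morph _ (ReDc) (erefl (complex.Re (0 : R[i])))) /=.
  apply: eq_bigr => j _; rewrite !mxE; case: (M a j) => x y /=; ring.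
rewrite -e (bigD1 b) //= lerDl; apply: sumr_ge0 => j _.
by rewrite addr_ge0 // sqr_ge0.
Qed.


Lemma sq_le1 (x y : R) : x ^+ 2 + y ^+ 2 <= 1 -> `|x| <= 1.
Proof. move=> h; rewrite ler_norml; apply/andP; split; nra. Qed.

Lemma coordRe_cont (a b : 'I_2) : continuous (fun A : 'M[R[i]]_2 => complex.Re (A a b)).
Proof. move=> A; apply: continuous_comp; [exact: coord_continuous | exact: Re_cont]. Qed.

Lemma coordIm_cont (a b : 'I_2) : continuous (fun A : 'M[R[i]]_2 => complex.Im (A a b)).
Proof. move=> A; apply: continuous_comp; [exact: coord_continuous | exact: Im_cont]. Qed.

Lemma cgood_entry (V : T -> 'M[R[i]]_2) : haar_U2 P V -> forall a b, cgood (fun w => V w a b).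
Proof.
move=> [hu hm _] a b.
have bRe w : `|complex.Re (V w a b)| <= 1 := sq_le1 _ _ (unit_bound _ (hu w) a b).
have bIm w : `|complex.Im (V w a b)| <= 1.
  apply: (sq_le1 _ (complex.Re (V w a b))); rewrite addrC; exact: (unit_bound _ (hu w) a b).
split; split.
- have -> : (fun w => complex.Re (V w a b)) = clampf (fun A => complex.Re (A a b)) \o V.
    by apply: funext => w /=; rewrite clamp_id.
  exact: hm _ (clamp_bc _ (coordRe_cont a b)).
- by exists 1.
- have -> : (fun w => complex.Im (V w a b)) = clampf (fun A => complex.Im (A a b)) \o V.
    by apply: funext => w /=; rewrite clamp_id.
  exact: hm _ (clamp_bc _ (coordIm_cont a b)).
- by exists 1.
Qed.

Lemma Expect_lin3 (a b e : R) f g h : rgood f -> rgood g -> rgood h ->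
  Expect P (fun w => a * f w + (b * g w + e * h w)) =
  a * Expect P f + (b * Expect P g + e * Expect P h).
Proof.
move=> hf hg hh.
have sf := rgood_mul _ _ (rgood_cst a) hf.
have sg := rgood_mul _ _ (rgood_cst b) hg.
have sh := rgood_mul _ _ (rgood_cst e) hh.
rewrite Expect_add //; last exact: rgood_add.
by rewrite Expect_add // !Expect_scale.
Qed.

End Meas.

Lemma cgood_tr (R : realType) (n : nat) (psi : bits n -> R[i]) (S : {set 'I_n})
    (d : measure_display) (T : measurableType d) (P : probability T R)
    (U : 'I_n -> T -> 'M[R[i]]_2)
    (hHaar : forall i, i \in S -> haar_U2 P (U i)) (z : outcome S) :
  rgood R d T (fun w => prob_out psi (fun i => U i w) z).
Proof.
suff : cgood R d T (fun w => trace (opmul (opmul (opmul (tensU S (fun i => U i w)) (pure_dm psi))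
                                  (adj (tensU S (fun i => U i w)))) (proj_out R z))) by case.
rewrite /trace /opmul /adj /tensU.
repeat first [ apply: cgood_cst | apply: cgood_sum => ? | apply: cgood_prod => ?
  | apply: cgood_mul | apply: cgood_conj | apply: cgood_if => ?
  | (apply: cgood_entry; apply: hHaar; assumption) ].
Qed.

Theorem lemma2 (R : realType) (n : nat) (psi : bits n -> R[i])
    (hpsi : \sum_(x : bits n) `|psi x| ^+ 2 = 1)
    (S : {set 'I_n}) (hS : S != finset.set0) (K : nat) (hK : (2 <= K)%N)
    (d : measure_display) (T : measurableType d) (P : probability T R)
    (U : 'I_n -> T -> 'M[R[i]]_2)
    (hHaar : forall i, i \in S -> haar_U2 P (U i))
    (hind : mutually_independent P S U) :
  let P2 := Pmom P psi S U 2 in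
  let P3 := Pmom P psi S U 3 in
  let P2_2 := P22 P psi S U in
  var_shat P psi S U K =
    (2 * P2 * (1 - P2) + 4 * (K%:R - 2) * (P3 - P2 ^+ 2)) / (K%:R * (K%:R - 1))
    + (K%:R - 2) * (K%:R - 3) * (P2_2 - P2 ^+ 2) / (K%:R * (K%:R - 1)).
Proof.
move=> P2 P3 P2_2.
have hK1 : (1 < K%:R :> R) by rewrite ltr1n.
set c := (K%:R * (K%:R - 1) : R).
have c0 : c != 0 by rewrite /c mulf_neq0 // lt0r_neq0 //; lra.
have hU w i : i \in S -> Defs.is_unitary (U i w).
  by move=> hi; case: (hHaar i hi) => h _ _; exact: h.
pose p w := fun z : outcome S => prob_out psi (fun i => U i w) z.
have hp w : \sum_z p w z = 1 := sum_prob_one _ _ _ _ hpsi _ (hU w).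
have q k : rgood R d T (fun w => \sum_z p w z ^+ k).
  apply: rgood_sum => z; apply: rgood_exp; exact: (cgood_tr _ _ _ _ _ _ _ _ hHaar).
have E1 : EJ P psi U (fun Z : {ffun 'I_K -> outcome S} => shat R Z) = P2.
  rewrite /EJ /P2 /Pmom; congr (Expect P _); apply: funext => w.
  transitivity (Ex R (outcome S) (p w) K (fun Z => c^-1 * Asum R (outcome S) K Z)); first by [].
  by rewrite Ex_scale (ExA _ _ _ _ (hp w)) G2 mulrA mulVf // mul1r.
have E2 : EJ P psi U (fun Z : {ffun 'I_K -> outcome S} => shat R Z ^+ 2) =
    Expect P (fun w => c^-1 * (2 * (\sum_z p w z ^+ 2) + (4 * (K - 2)%:R * (\sum_z p w z ^+ 3)
       + (K - 2)%:R * ((K - 2)%:R - 1) * (\sum_z p w z ^+ 2) ^+ 2))).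
  rewrite /EJ; congr (Expect P _); apply: funext => w.
  transitivity (Ex R (outcome S) (p w) K (fun Z => c^-1 * (c^-1 * Asum R (outcome S) K Z ^+ 2))).
    rewrite /Ex; apply: eq_bigr => Z _; by rewrite /shat exprMn expr2 mulrA.
  rewrite !Ex_scale (ExA2 _ _ _ _ (hp w)) G0 G1 G2.
  rewrite -/c; congr (_ * _); rewrite mulrA mulVf // mul1r; ring.
rewrite /var_shat E1 E2.
have q2 := q 2%N; have q3 := q 3%N; have q22 := rgood_exp _ _ _ _ 2 q2.
rewrite Expect_scale; last first.
  apply: rgood_add; first exact: (rgood_mul _ _ _ _ _ (rgood_cst _ _ _ _) q2).
  apply: rgood_add; first exact: (rgood_mul _ _ _ _ _ (rgood_cst _ _ _ _) q3).
  exact: (rgood_mul _ _ _ _ _ (rgood_cst _ _ _ _) q22).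
rewrite (Expect_lin3 _ _ _ _ _ _ _ _ _ _ q2 q3 q22).
rewrite -/(Pmom P psi S U 2) -/(Pmom P psi S U 3) -/(P22 P psi S U) -/P2 -/P3 -/P2_2.
rewrite natrB //.
rewrite /c; field.
by apply/andP; split; apply: lt0r_neq0; lra.
Qed.
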